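(* Consider the blown-up Kolmogorov-flow system described in the context. Substitute the expansions $\bar u=\sum_{j\ge0}u^{(j)}r^j$, $\bar v=\sum_{j\ge0}v^{(j)}r^j$, $\bar p=r\sum_{j\ge0}p^{(j)}r^j$ (all functions of $(\bar x,y,\bar t)$, $2\pi$-periodic in $y\in(-\pi,\pi)$, with $\int_{-\pi}^\pi u^{(j)}dy=0$) into the equations and match powers of $r$, treating $r^{-1}\partial_{\bar t}r$ and $\bar{\mathcal R}(\bar t)$ as order one. Then at leading order $v^{(0)}=A(\bar x,\bar t)$ and $u^{(0)}=-\sqrt2\cos y\,A(\bar x,\bar t)$ for a real function $A$, i.e. $(u^{(0)},v^{(0)})=A\boldsymbol\varphi$ with $\boldsymbol\varphi=(-\sqrt2\cos y,1)^\top$, and a necessary condition for solvability (periodicity in $y$ of $p^{(3)}$) of the order-$r^3$ pressure equation is that $$\partial_{\bar t}A=-r(\bar t)^{-1}\partial_{\bar t}r(\bar t)\,A-3\partial_{\bar x}^4A-\sqrt2\,\bar{\mathcal R}(\bar t)\partial_{\bar x}^2A+\tfrac23\partial_{\bar x}^2(A^3).$$ Consequently, in charts (with $\beta=4$): $\mathcal K_1:\ \partial_{t_1}A_1=\tfrac{\varepsilon_1(t_1)}{2}A_1-3\partial_{x_1}^4A_1+\sqrt2\partial_{x_1}^2A_1+\tfrac23\partial_{x_1}^2(A_1^3)$; $\mathcal K_2:\ \partial_{t_2}A_2=-3\partial_{x_2}^4A_2-\sqrt2\mathcal R_2(t_2)\partial_{x_2}^2A_2+\tfrac23\partial_{x_2}^2(A_2^3)$;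 $\mathcal K_3:\ \partial_{t_3}A_3=-\tfrac{\varepsilon_3(t_3)}{2}A_3-3\partial_{x_3}^4A_3-\sqrt2\partial_{x_3}^2A_3+\tfrac23\partial_{x_3}^2(A_3^3)$, with $\varepsilon_1(t_1)=\frac{2\varepsilon_1(0)}{2-6\varepsilon_1(0)t_1}$, $\mathcal R_2(t_2)=\mathcal R_2(0)+t_2$, $\varepsilon_3(t_3)=\frac{2\varepsilon_3(0)}{2+6\varepsilon_3(0)t_3}$.
   Context: The underlying problem is the planar incompressible Navier–Stokes flow with Kolmogorov forcing and slowly increasing Reynolds number, on $(x,y)\in\mathbb R\times(-\pi,\pi)$ with periodic boundary conditions in $y$: for the perturbation $\mathbf U'=(u',v')$ of the basic flow $(\mathcal R\sin y,0)$ and pressure perturbation $p'$, $\partial_t\mathbf U'=-(\mathbf U'\cdot\nabla)\mathbf U'-\nabla p'+\Delta\mathbf U'-(\mathcal R'+\sqrt2)W\mathbf U'+\varepsilon(-\sin y,0)^\top$, $\dot{\mathcal R}'=\varepsilon$, where $W=\begin{pmatrix}\sin y\,\partial_x&\cos y\\0&\sin y\,\partial_x\end{pmatrix}$, $\mathcal R'=\mathcal R-\sqrt2$, with $\nabla\cdot\mathbf U'=0$ and zero mean flow $\int_{-\pi}^\pi u'\,dy=0$. The blow-up (with $\beta=4$) is $(\mathbf U',p')=r(\bar t)(\bar u,\bar v,\bar p)(\bar x,y,\bar t)$, $\mathcal R'=r^2\bar{\mathcal R}$, $\varepsilon=r^6\bar\varepsilon$, $(\bar{\mathcal R},\bar\varepsilon)\in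 S^1$, $\partial_x=r\partial_{\bar x}$, $\partial_t=r^4\partial_{\bar t}$ ($y$ is not rescaled). The resulting blown-up equations are $\partial_y\bar v=-r\partial_{\bar x}\bar u$, $\partial_y^2\bar u=\sqrt2\cos y\,\bar v+(\sqrt2\sin y\,\partial_{\bar x}\bar u+\bar v\partial_y\bar u)r+(\bar u\partial_{\bar x}\bar u-\partial_{\bar x}^2\bar u+\partial_{\bar x}\bar p+\bar{\mathcal R}\bar v\cos y)r^2+\bar{\mathcal R}\sin y\,\partial_{\bar x}\bar u\,r^3+(\partial_{\bar t}\bar u+r^{-1}\bar u\partial_{\bar t}r)r^4+\bar\varepsilon\sin y\,r^5$, $\partial_y\bar p=-\partial^2_{\bar xy}\bar u-\sqrt2\sin y\,\partial_{\bar x}\bar v-\bar v\partial_y\bar v+(-\bar u\partial_{\bar x}\bar v+\partial_{\bar x}^2\bar v)r-\bar{\mathcal R}\sin y\,\partial_{\bar x}\bar v\,r^2-(\partial_{\bar t}\bar v+\bar vr^{-1}\partial_{\bar t}r)r^3$, together with $\int_{-\pi}^\pi\bar u\,dy=0$. Charts: $\mathcal K_1$: $\bar{\mathcal R}=-1$, $\varepsilon=r_1^6\varepsilon_1$, $\dot r_1=-\tfrac12r_1\varepsilon_1$, $\dot\varepsilon_1=3\varepsilon_1^2$; $\mathcal K_2$: $\bar\varepsilon=1$, $\mathcal R'=r_2^2\mathcal R_2$, $\dot r_2=0$, $\dot{\mathcal R}_2=1$; $\mathcal K_3$: $\bar{\mathcal R}=1$, $\varepsilon=r_3^6\varepsilon_3$,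 $\dot r_3=\tfrac12r_3\varepsilon_3$, $\dot\varepsilon_3=-3\varepsilon_3^2$; $t_l,x_l,A_l$ denote desingularized time, space and amplitude in chart $\mathcal K_l$. *)

(* Defs.v *)
From Stdlib Require Import Reals Lra Lia.
From Coquelicot Require Import Coquelicot.
Open Scope R_scope.

(* A scalar field f(xbar, y, tbar). *)
Definition F3 := R -> R -> R -> R.

Definition px (f : F3) : F3 := fun x y t => Derive (fun z => f z y t) x.
Definition py (f : F3) : F3 := fun x y t => Derive (fun z => f x z t) y.
Definition pt (f : F3) : F3 := fun x y t => Derive (fun z => f x y z) t.

Definition pdir (d : nat) (f : F3) : F3 :=
  match d with O => px f | S O => py f | _ => pt f end.
Fixpoint pd (l : list nat) (f : F3) : F3 :=
  match l with nil => f | cons d l' => pdir d (pd l' f) end.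

Definition smooth_on (a b : R) (f : F3) : Prop :=
  forall (l : list nat) (x y t : R), a < t < b ->
    ex_derive (fun z => pd l f z y t) x /\
    ex_derive (fun z => pd l f x z t) y /\
    ex_derive (fun z => pd l f x y z) t /\
    continuous (fun q : R * R * R => pd l f (fst (fst q)) (snd (fst q)) (snd q))
               ((x, y), t).

(* Coefficient of r^j of (r^k * sum_i g_i r^i): g_(j-k), or 0 if j < k. *)
Definition lower (k j : nat) (g : nat -> R) : R :=
  if (k <=? j)%nat then g (j - k)%nat else 0.

Definition cv (F G : nat -> R) (n : nat) : R :=
  sum_f_R0 (fun i => F i * G (n - i)%nat) n.

(* The equations obtained by matching the coefficient of r^j in the blown-up
   system, for ubar = sum u_j r^j, vbar = sum v_j r^j and pressure
   r * sum p_j r^j, with rho = r^{-1} d_tbar r and Rb, eb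
   treated as order one. *)
Definition order_eqs (rho Rb eb : R -> R) (u v p : nat -> F3)
    (j : nat) (x y t : R) : Prop :=
  let U  := fun i => u i x y t in
  let V  := fun i => v i x y t in
  let Ux := fun i => px (u i) x y t in
  let Uy := fun i => py (u i) x y t in
  let Vx := fun i => px (v i) x y t in
  let Vy := fun i => py (v i) x y t in
  (* continuity equation *)
  py (v j) x y t = - lower 1 j Ux /\
  (* x-momentum *)
  py (py (u j)) x y t =
      sqrt 2 * cos y * V j
    + lower 1 j (fun i => sqrt 2 * sin y * Ux i)
    + lower 1 j (cv V Uy)
    + lower 2 j (cv U Ux)
    - lower 2 j (fun i => px (px (u i)) x y t)
    + lower 2 j (fun i => px (p i) x y t)
    + Rb t * cos y * lower 2 j V
    + Rb t * sin y * lower 3 j Ux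
    + lower 4 j (fun i => pt (u i) x y t + rho t * U i)
    + (if (j =? 5)%nat then eb t * sin y else 0) /\
  (* y-momentum (pressure equation) *)
  py (p j) x y t =
    - px (py (u j)) x y t
    - sqrt 2 * sin y * Vx j
    - cv V Vy j
    + lower 1 j (fun i => - cv U Vx i + px (px (v i)) x y t)
    - Rb t * sin y * lower 2 j Vx
    - lower 3 j (fun i => pt (v i) x y t + rho t * V i).

Definition hierarchy (a b : R) (rho Rb eb : R -> R) (u v p : nat -> F3) : Prop :=
  (forall j, smooth_on a b (u j) /\ smooth_on a b (v j) /\ smooth_on a b (p j)) /\
  (forall j x y t, a < t < b ->
      u j x (y + 2 * PI) t = u j x y t /\
      v j x (y + 2 * PI) t = v j x y t /\
      p j x (y + 2 * PI) t = p j x y t) /\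
  (forall j x t, a < t < b -> RInt (fun y => u j x y t) (- PI) PI = 0) /\
  (forall j x y t, a < t < b -> order_eqs rho Rb eb u v p j x y t).

Definition dx (A : R -> R -> R) : R -> R -> R := fun x t => Derive (fun z => A z t) x.
Definition dt (A : R -> R -> R) : R -> R -> R := fun x t => Derive (fun s => A x s) t.

Definition amplitude_law (a b : R) (c0 c2 : R -> R) (u v : nat -> F3) : Prop :=
  exists A : R -> R -> R,
    (forall x y t, a < t < b ->
        v 0%nat x y t = A x t /\ u 0%nat x y t = - sqrt 2 * cos y * A x t) /\
    (forall x t, a < t < b ->
        dt A x t = c0 t * A x t
                   - 3 * dx (dx (dx (dx A))) x t
                   + c2 t * dx (dx A) x t
                   + 2 / 3 * dx (dx (fun z s => A z s ^ 3)) x t).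

(* Main.v *)
Require Import Defs.
From Stdlib Require Import Reals Lra Lia.
From Coquelicot Require Import Coquelicot.
Open Scope R_scope.


Fixpoint zeros (k : nat) : list nat := match k with O => nil | S k => cons 0%nat (zeros k) end.
Definition E (f : F3) (k : nat) (t z : R) : R := pd (zeros k) f z 0 t.

Lemma D_eq (f : R -> R) (x l l' : R) : is_derive f x l -> l = l' -> is_derive f x l'.
Proof.  intros H ->; exact H. Qed.
Lemma D_add (f g : R -> R) x df dg : is_derive f x df -> is_derive g x dg ->
  is_derive (fun z => f z + g z) x (df + dg).
Proof.  intros; apply (is_derive_plus f g); auto. Qed.
Lemma D_sub (f g : R -> R) x df dg : is_derive f x df -> is_derive g x dg ->
  is_derive (fun z => f z - g z) x (df - dg).
Proof.  intros; apply (is_derive_minus f g); auto. Qed.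
Lemma D_mul (f g : R -> R) x df dg : is_derive f x df -> is_derive g x dg ->
  is_derive (fun z => f z * g z) x (df * g x + f x * dg).
Proof.  intros; apply (is_derive_mult f g); auto. intros; apply Rmult_comm. Qed.
Lemma D_opp (f : R -> R) x df : is_derive f x df -> is_derive (fun z => - f z) x (- df).
Proof.  intros; apply (is_derive_opp f); auto. Qed.
Lemma D_const (c x : R) : is_derive (fun _ => c) x 0.
Proof.  apply (is_derive_const c). Qed.
Lemma D_id (x : R) : is_derive (fun z => z) x 1.
Proof.  apply (is_derive_id x). Qed.
Lemma D_pow (f : R -> R) n x df : is_derive f x df ->
  is_derive (fun z => f z ^ n) x (INR n * df * f x ^ Init.Nat.pred n).
Proof.  intros; apply is_derive_pow; auto. Qed.
Lemma D_cos (f : R -> R) x df : is_derive f x df -> is_derive (fun z => cos (f z)) x (- sin (f x) * df).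
Proof.  intros H. apply is_derive_Reals in H. apply is_derive_Reals.
  apply (derivable_pt_lim_comp f cos). exact H. apply derivable_pt_lim_cos. Qed.
Lemma D_sin (f : R -> R) x df : is_derive f x df -> is_derive (fun z => sin (f z)) x (cos (f x) * df).
Proof.  intros H. apply is_derive_Reals in H. apply is_derive_Reals.
  apply (derivable_pt_lim_comp f sin). exact H. apply derivable_pt_lim_sin. Qed.

Lemma D_cos0 x : is_derive cos x (- sin x).
Proof.  apply is_derive_Reals, derivable_pt_lim_cos. Qed.
Lemma D_sin0 x : is_derive sin x (cos x).
Proof.  apply is_derive_Reals, derivable_pt_lim_sin. Qed.

Ltac dstep := match goal with
  | |- is_derive (fun _ => ?c) _ _ => apply (D_const c)
  | |- is_derive (fun z => z) _ _ => apply D_id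
  | |- is_derive cos _ _ => apply D_cos0
  | |- is_derive sin _ _ => apply D_sin0
  | |- is_derive (fun z => @?f z + @?g z) _ _ => apply (D_add f g)
  | |- is_derive (fun z => @?f z - @?g z) _ _ => apply (D_sub f g)
  | |- is_derive (fun z => - @?f z) _ _ => apply (D_opp f)
  | |- is_derive (fun z => @?f z * @?g z) _ _ => apply (D_mul f g)
  | |- is_derive (fun z => @?f z ^ ?n) _ _ => apply (D_pow f n)
  | |- is_derive (fun z => cos (@?f z)) _ _ => apply (D_cos f)
  | |- is_derive (fun z => sin (@?f z)) _ _ => apply (D_sin f)
  | H : is_derive ?f _ _ |- is_derive ?f _ _ => apply H
  | H : is_derive ?f _ _ |- is_derive (fun z => ?f z) _ _ => apply H
  | H : forall z, is_derive ?f z _ |- is_derive ?f _ _ => apply H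
  | H : forall z, is_derive ?f z _ |- is_derive (fun z => ?f z) _ _ => apply H
  | H : forall (k : nat) (z : R), is_derive (E ?f _ ?t) z _ |- is_derive (fun z => E ?f ?k ?t z) _ _ => apply (H k)
  | H : forall (k : nat) (z : R), is_derive (E ?f _ ?t) z _ |- is_derive (E ?f ?k ?t) _ _ => apply (H k)
  end.
Ltac dtac := repeat dstep.
Ltac dsolve := eapply D_eq; [dtac | try ring].


Definition trig (al be ga y : R) := al + be * cos y + ga * sin y.

Lemma deriv0_const (g : R -> R) : (forall y : R, is_derive g y 0) -> forall y : R, g y = g 0.
Proof. 
  intros H y.
  destruct (MVT_gen g 0 y (fun _ => 0)) as [c [_ Hc]].
  - intros; apply H.
  - intros x _. apply derivable_continuous_pt. exists 0. apply is_derive_Reals, H.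
  - lra.
Qed.

Lemma antider (g G dG : R -> R) : (forall y : R, is_derive g y (dG y)) ->
  (forall y : R, is_derive G y (dG y)) -> forall y : R, g y = G y + (g 0 - G 0).
Proof. 
  intros Hg HG y.
  assert (H := deriv0_const (fun z => g z - G z)).
  cbv beta in H.
  assert (Hz : forall z, is_derive (fun z => g z - G z) z 0).
  { intros z. eapply D_eq. apply (D_sub g G); [apply Hg | apply HG]. ring. }
  specialize (H Hz y). lra.
Qed.

Lemma per_D (g : R -> R) c : (forall y, ex_derive g y) -> (forall y, g (y + c) = g y) ->
  forall y, Derive g (y + c) = Derive g y.
Proof. 
  intros Hd Hp y. symmetry.
  rewrite (Derive_ext g (fun z => g (z + c))) by (intros; symmetry; apply Hp).
  apply is_derive_unique.
  eapply D_eq. apply (is_derive_comp g (fun z => z + c)).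
  apply Derive_correct, Hd. eapply D_eq. apply (D_add (fun z => z) (fun _ => c)).
  apply D_id. apply D_const. reflexivity.
  simpl. unfold scal; simpl. unfold mult; simpl. ring.
Qed.

Lemma ode1 (g : R -> R) m q1 q2 : (forall y, ex_derive g y) ->
  (forall y, Derive g y = trig m q1 q2 y) -> (forall y, g (y + 2 * PI) = g y) ->
  m = 0 /\ forall y, g y = trig (g 0 + q2) (- q2) q1 y.
Proof. 
  intros Hd HD Hp.
  assert (Ha := antider g (fun y => m * y + q1 * sin y - q2 * cos y) (trig m q1 q2)).
  assert (Hb : forall y, g y = m * y + q1 * sin y - q2 * cos y + (g 0 - (m * 0 + q1 * sin 0 - q2 * cos 0))).
  { apply Ha. intros y. rewrite <- HD. apply Derive_correct, Hd.
    intros y. unfold trig. dsolve. }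
  rewrite sin_0, cos_0 in Hb.
  assert (Hm : m = 0).
  { assert (H1 := Hp 0). rewrite (Hb (0 + 2 * PI)), (Hb 0) in H1.
    rewrite Rplus_0_l, sin_2PI, cos_2PI, sin_0, cos_0 in H1.
    assert (PI > 0) by apply PI_RGT_0. nra. }
  split; [exact Hm|]. intros y. rewrite Hb. unfold trig. subst m. ring.
Qed.

Lemma RInt_trig al be ga : RInt (fun y => trig al be ga y) (- PI) PI = 2 * PI * al.
Proof. 
  apply is_RInt_unique.
  assert (H := is_RInt_derive (fun y => al * y + be * sin y - ga * cos y) (trig al be ga) (- PI) PI).
  replace (2 * PI * al) with (minus (al * PI + be * sin PI - ga * cos PI) (al * - PI + be * sin (- PI) - ga * cos (- PI))).
  apply H.
  - intros x _. unfold trig. dsolve.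
  - intros x _. apply (ex_derive_continuous (trig al be ga)). exists (al * 0 + be * (- sin x) + ga * cos x).
    unfold trig. dsolve.
  - rewrite sin_neg, cos_neg, sin_PI. unfold minus, plus, opp; simpl. ring.
Qed.

Lemma ode2 (g : R -> R) m q1 q2 : (forall y, ex_derive g y) -> (forall y, ex_derive (Derive g) y) ->
  (forall y, Derive (Derive g) y = trig m q1 q2 y) -> (forall y, g (y + 2 * PI) = g y) ->
  RInt g (- PI) PI = 0 ->
  m = 0 /\ forall y, g y = trig 0 (- q1) (- q2) y.
Proof. 
  intros Hd Hdd HD Hp HI.
  destruct (ode1 (Derive g) m q1 q2 Hdd HD (per_D g _ Hd Hp)) as [Hm Hg'].
  destruct (ode1 g (Derive g 0 + q2) (-q2) q1 Hd Hg' Hp) as [Hm2 Hg].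
  split; [exact Hm|].
  assert (Hg2 : forall y, g y = trig (g 0 + q1) (- q1) (- q2) y).
  { intros y. rewrite Hg. unfold trig. ring. }
  rewrite (RInt_ext g (fun y => trig (g 0 + q1) (- q1) (- q2) y)) in HI by (intros; apply Hg2).
  rewrite RInt_trig in HI.
  assert (PI > 0) by apply PI_RGT_0.
  assert (H0 : g 0 + q1 = 0) by nra.
  intros y. rewrite Hg. unfold trig. rewrite H0. ring.
Qed.

Lemma pyth_fix y k X Y : X = Y + k * (1 - (sin y * sin y + cos y * cos y)) -> X = Y.
Proof.  intros H. assert (Hsc := sin2_cos2 y). unfold Rsqr in Hsc. rewrite H.
  replace (sin y * sin y + cos y * cos y) with 1 by lra. ring. Qed.

Lemma mean2 (G : R -> R) m q1 q2 q3 q4 q5 : (forall y, ex_derive G y) ->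
  (forall y, Derive G y = m + q1 * cos y + q2 * sin y + q3 * (cos y * cos y)
                          + q4 * (sin y * cos y) + q5 * (sin y * sin y)) ->
  (forall y, G (y + 2 * PI) = G y) -> m + (q3 + q5) / 2 = 0.
Proof. 
  intros Hd HD Hp.
  remember (m + (q3 + q5) / 2) as M eqn:HM.
  assert (Ha := antider G (fun y => M * y + q1 * sin y - q2 * cos y + (q3 - q5) / 2 * (sin y * cos y)
                + q4 / 2 * (sin y * sin y)) (Derive G)).
  assert (Hb : forall y, G y = M * y + q1 * sin y - q2 * cos y + (q3 - q5) / 2 * (sin y * cos y)
                + q4 / 2 * (sin y * sin y) + (G 0 - (M * 0 + q1 * sin 0 - q2 * cos 0 + (q3 - q5) / 2 * (sin 0 * cos 0)
                + q4 / 2 * (sin 0 * sin 0)))).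
  { apply Ha. intros y. apply Derive_correct, Hd.
    intros y. dsolve. rewrite HD. rewrite HM.
    apply (pyth_fix y ((q3 + q5) / 2)). field. }
  assert (H1 := Hp 0). rewrite (Hb (0 + 2 * PI)), (Hb 0) in H1.
  rewrite Rplus_0_l, sin_2PI, cos_2PI, sin_0, cos_0 in H1.
  assert (PI > 0) by apply PI_RGT_0. rewrite HM in H1. nra.
Qed.
Lemma Ebase a b f t : smooth_on a b f -> a < t < b ->
  forall k (z : R), is_derive (E f k t) z (E f (S k) t z).
Proof. 
  intros Hs Ht k z. apply (Derive_correct (E f k t)).
  destruct (Hs (zeros k) z 0 t Ht) as [H _]. exact H.
Qed.

Lemma sm_y a b f t l x : smooth_on a b f -> a < t < b ->
  forall y : R, ex_derive (fun w => pd l f x w t) y.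
Proof.  intros Hs Ht y. apply (Hs l x y t Ht). Qed.

Lemma cont2 a b f t l x y : smooth_on a b f -> a < t < b ->
  continuity_2d_pt (fun u v => pd l f u v t) x y.
Proof. 
  intros Hs Ht. apply continuity_2d_pt_filterlim.
  destruct (Hs l x y t Ht) as [_ [_ [_ Hc]]].
  apply (continuous_comp_2 (fun z : R * R => z) (fun _ => t)
           (fun (z : R * R) (s : R) => pd l f (fst z) (snd z) s) (x, y)).
  apply continuous_id. apply continuous_const. exact Hc.
Qed.

Lemma schwarz3 a b f t x y : smooth_on a b f -> a < t < b ->
  py (px f) x y t = px (py f) x y t.
Proof. 
  intros Hs Ht.
  assert (H := Schwarz (fun u v => f u v t) x y).
  symmetry. apply H.
  - exists (mkposreal 1 Rlt_0_1). intros u v _ _. repeat split.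
    + apply (Hs nil u v t Ht).
    + apply (Hs nil u v t Ht).
    + apply (Hs (cons 1%nat nil) u v t Ht).
    + apply (Hs (cons 0%nat nil) u v t Ht).
  - apply (cont2 a b f t (cons 0%nat (cons 1%nat nil)) x y Hs Ht).
  - apply (cont2 a b f t (cons 1%nat (cons 0%nat nil)) x y Hs Ht).
Qed.

Lemma pt_loc a b (f : F3) (g : R -> R) t x y : a < t < b ->
  (forall s, a < s < b -> f x y s = g s) -> pt f x y t = Derive g t.
Proof. 
  intros Ht H. unfold pt. apply Derive_ext_loc.
  assert (Hd : 0 < Rmin (t - a) (b - t)) by (apply Rmin_pos; lra).
  exists (mkposreal _ Hd). intros s Hs. apply H.
  unfold ball in Hs; simpl in Hs; unfold AbsRing_ball, abs, minus, plus, opp in Hs; simpl in Hs.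
  apply Rabs_def2 in Hs. destruct Hs as [H1 H2].
  assert (Rmin (t - a) (b - t) <= t - a) by apply Rmin_l.
  assert (Rmin (t - a) (b - t) <= b - t) by apply Rmin_r. lra.
Qed.

Lemma px_trig (f : F3) t x y (al be ga : R -> R) dal dbe dga :
 (forall z w, f z w t = trig (al z) (be z) (ga z) w) ->
 is_derive al x dal -> is_derive be x dbe -> is_derive ga x dga ->
 px f x y t = trig dal dbe dga y.
Proof. 
  intros Hf H1 H2 H3. unfold px.
  rewrite (Derive_ext _ (fun z => trig (al z) (be z) (ga z) y)) by auto.
  apply is_derive_unique. unfold trig. dsolve.
Qed.

Lemma py_trig (f : F3) t x y al be ga : (forall w, f x w t = trig al be ga w) ->
  py f x y t = trig 0 ga (- be) y.
Proof. 
  intros Hf. unfold py.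
  rewrite (Derive_ext _ (fun w => trig al be ga w)) by auto.
  apply is_derive_unique. unfold trig. dsolve.
Qed.

Ltac geteqs He j x y t Ht Hc Hm Hp :=
  let H := fresh in pose proof (He j x y t Ht) as H; unfold order_eqs in H;
  cbn [lower cv sum_f_R0 Nat.leb Nat.sub Nat.eqb] in H; destruct H as [Hc [Hm Hp]].

Lemma step0v a b rho Rb eb u v p : hierarchy a b rho Rb eb u v p -> forall t, a < t < b ->
  forall x y, v 0%nat x y t = E (v 0%nat) 0 t x.
Proof. 
  intros [Hs [Hper [Hmean He]]] t Ht x y.
  apply (deriv0_const (fun w => v 0%nat x w t)).
  intros w. destruct (Hs 0%nat) as [_ [Hv _]].
  eapply D_eq. apply (Derive_correct (fun w => v 0%nat x w t)). apply (sm_y a b _ t nil x Hv Ht).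
  geteqs He 0%nat x w t Ht Hc Hm Hp. change (py (v 0%nat) x w t = 0). rewrite Hc. ring.
Qed.

Lemma bases a b rho Rb eb u v p : hierarchy a b rho Rb eb u v p -> forall t, a < t < b ->
  (forall k (z : R), is_derive (E (v 0%nat) k t) z (E (v 0%nat) (S k) t z)) /\
  (forall k (z : R), is_derive (E (v 1%nat) k t) z (E (v 1%nat) (S k) t z)) /\
  (forall k (z : R), is_derive (E (v 2%nat) k t) z (E (v 2%nat) (S k) t z)) /\
  (forall k (z : R), is_derive (E (p 0%nat) k t) z (E (p 0%nat) (S k) t z)).
Proof. 
  intros [Hs _] t Ht.
  destruct (Hs 0%nat) as [_ [H0 H0p]]. destruct (Hs 1%nat) as [_ [H1 _]]. destruct (Hs 2%nat) as [_ [H2 _]].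
  split; [|split; [|split]]; apply (Ebase a b _ t); assumption.
Qed.


Lemma sq2_2 : sqrt 2 ^ 2 = 2.
Proof. simpl. rewrite Rmult_1_r. apply sqrt_sqrt. lra. Qed.
Lemma sq2_3 : sqrt 2 ^ 3 = 2 * sqrt 2.
Proof. replace (sqrt 2 ^ 3) with (sqrt 2 ^ 2 * sqrt 2) by ring. rewrite sq2_2. ring. Qed.
Lemma sq2_4 : sqrt 2 ^ 4 = 4.
Proof. replace (sqrt 2 ^ 4) with (sqrt 2 ^ 2 * sqrt 2 ^ 2) by ring. rewrite sq2_2. ring. Qed.
Ltac sq2ring := ring_simplify; rewrite ?sq2_2, ?sq2_3, ?sq2_4; ring.

Lemma step0u a b rho Rb eb u v p : hierarchy a b rho Rb eb u v p -> forall t, a < t < b ->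
  forall x y, u 0%nat x y t = trig 0 (- (sqrt 2 * E (v 0%nat) 0 t x)) 0 y.
Proof.
  intros H t Ht x. pose proof (step0v _ _ _ _ _ _ _ _ H t Ht) as H0v.
  destruct H as [Hs [Hper [Hmean He]]].
  destruct (Hs 0%nat) as [Hu _].
  destruct (ode2 (fun w => u 0%nat x w t) 0 (sqrt 2 * E (v 0%nat) 0 t x) 0) as [_ Hf].
  - apply (sm_y a b _ t nil x Hu Ht).
  - apply (sm_y a b _ t (cons 1%nat nil) x Hu Ht).
  - intros y. geteqs He 0%nat x y t Ht Hc Hm Hp.
    change (py (py (u 0%nat)) x y t = trig 0 (sqrt 2 * E (v 0%nat) 0 t x) 0 y).
    rewrite Hm, H0v. unfold trig. ring.
  - intros y. apply (Hper 0%nat x y t Ht).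
  - apply (Hmean 0%nat x t Ht).
  - intros y. rewrite Hf. unfold trig. ring.
Qed.

Lemma step0p a b rho Rb eb u v p : hierarchy a b rho Rb eb u v p -> forall t, a < t < b ->
  forall x y, p 0%nat x y t = trig (E (p 0%nat) 0 t x - 2 * sqrt 2 * E (v 0%nat) 1 t x)
                                   (2 * sqrt 2 * E (v 0%nat) 1 t x) 0 y.
Proof.
  intros H t Ht x. pose proof (step0v _ _ _ _ _ _ _ _ H t Ht) as H0v.
  pose proof (step0u _ _ _ _ _ _ _ _ H t Ht) as H0u.
  destruct (bases _ _ _ _ _ _ _ _ H t Ht) as [B0 [B1 [B2 BP]]].
  destruct H as [Hs [Hper [Hmean He]]].
  destruct (Hs 0%nat) as [Hu [Hv Hp0]].
  assert (Hpyu : forall z w, py (u 0%nat) z w t = trig 0 0 (sqrt 2 * E (v 0%nat) 0 t z) w).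
  { intros z w. rewrite (py_trig _ t z w 0 (- (sqrt 2 * E (v 0%nat) 0 t z)) 0) by (intros; apply H0u).
    unfold trig; ring. }
  destruct (ode1 (fun w => p 0%nat x w t) 0 0 (- (2 * sqrt 2 * E (v 0%nat) 1 t x))) as [_ Hf].
  - apply (sm_y a b _ t nil x Hp0 Ht).
  - intros y. geteqs He 0%nat x y t Ht Hc Hm Hp.
    change (py (p 0%nat) x y t = trig 0 0 (- (2 * sqrt 2 * E (v 0%nat) 1 t x)) y).
    rewrite Hp, Hc.
    rewrite (px_trig (py (u 0%nat)) t x y (fun _ => 0) (fun _ => 0) (fun z => sqrt 2 * E (v 0%nat) 0 t z)
               0 0 (sqrt 2 * E (v 0%nat) 1 t x) Hpyu) by dsolve.
    assert (H0v' : forall z w, v 0%nat z w t = trig (E (v 0%nat) 0 t z) 0 0 w).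
    { intros; rewrite H0v; unfold trig; ring. }
    rewrite (px_trig (v 0%nat) t x y (fun z => E (v 0%nat) 0 t z) (fun _ => 0) (fun _ => 0)
               (E (v 0%nat) 1 t x) 0 0 H0v') by dsolve.
    unfold trig; ring.
  - intros y. apply (Hper 0%nat x y t Ht).
  - intros y. rewrite Hf. unfold trig. change (p 0%nat x 0 t) with (E (p 0%nat) 0 t x). ring.
Qed.

Lemma step1v a b rho Rb eb u v p : hierarchy a b rho Rb eb u v p -> forall t, a < t < b ->
  forall x y, v 1%nat x y t = trig (E (v 1%nat) 0 t x) 0 (sqrt 2 * E (v 0%nat) 1 t x) y.
Proof.
  intros H t Ht x.
  pose proof (step0u _ _ _ _ _ _ _ _ H t Ht) as H0u.
  destruct (bases _ _ _ _ _ _ _ _ H t Ht) as [B0 [B1 [B2 BP]]].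
  destruct H as [Hs [Hper [Hmean He]]].
  destruct (Hs 1%nat) as [Hu [Hv Hp0]].
  destruct (ode1 (fun w => v 1%nat x w t) 0 (sqrt 2 * E (v 0%nat) 1 t x) 0) as [_ Hf].
  - apply (sm_y a b _ t nil x Hv Ht).
  - intros y. geteqs He 1%nat x y t Ht Hc Hm Hp.
    change (py (v 1%nat) x y t = trig 0 (sqrt 2 * E (v 0%nat) 1 t x) 0 y).
    rewrite Hc.
    rewrite (px_trig (u 0%nat) t x y (fun _ => 0) (fun z => - (sqrt 2 * E (v 0%nat) 0 t z)) (fun _ => 0)
               0 (- (sqrt 2 * E (v 0%nat) 1 t x)) 0 H0u) by dsolve.
    unfold trig; ring.
  - intros y. apply (Hper 1%nat x y t Ht).
  - intros y. rewrite Hf. unfold trig. change (v 1%nat x 0 t) with (E (v 1%nat) 0 t x). ring.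
Qed.

Lemma step1u a b rho Rb eb u v p : hierarchy a b rho Rb eb u v p -> forall t, a < t < b ->
  forall x y, u 1%nat x y t = trig 0 (- (sqrt 2 * E (v 1%nat) 0 t x))
                                   (- (sqrt 2 * (E (v 0%nat) 0 t x * E (v 0%nat) 0 t x))) y.
Proof.
  intros H t Ht x.
  pose proof (step0v _ _ _ _ _ _ _ _ H t Ht) as H0v.
  pose proof (step0u _ _ _ _ _ _ _ _ H t Ht) as H0u.
  pose proof (step1v _ _ _ _ _ _ _ _ H t Ht) as H1v.
  destruct (bases _ _ _ _ _ _ _ _ H t Ht) as [B0 [B1 [B2 BP]]].
  destruct H as [Hs [Hper [Hmean He]]].
  destruct (Hs 1%nat) as [Hu [Hv Hp0]].
  destruct (ode2 (fun w => u 1%nat x w t) 0 (sqrt 2 * E (v 1%nat) 0 t x)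
              (sqrt 2 * (E (v 0%nat) 0 t x * E (v 0%nat) 0 t x))) as [_ Hf].
  - apply (sm_y a b _ t nil x Hu Ht).
  - apply (sm_y a b _ t (cons 1%nat nil) x Hu Ht).
  - intros y. geteqs He 1%nat x y t Ht Hc Hm Hp.
    change (py (py (u 1%nat)) x y t = trig 0 (sqrt 2 * E (v 1%nat) 0 t x)
              (sqrt 2 * (E (v 0%nat) 0 t x * E (v 0%nat) 0 t x)) y).
    rewrite Hm.
    rewrite (px_trig (u 0%nat) t x y (fun _ => 0) (fun z => - (sqrt 2 * E (v 0%nat) 0 t z)) (fun _ => 0)
               0 (- (sqrt 2 * E (v 0%nat) 1 t x)) 0 H0u) by dsolve.
    rewrite (py_trig (u 0%nat) t x y 0 (- (sqrt 2 * E (v 0%nat) 0 t x)) 0) by (intros; apply H0u).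
    rewrite H1v, H0v.
    unfold trig; ring.
  - intros y. apply (Hper 1%nat x y t Ht).
  - apply (Hmean 1%nat x t Ht).
  - intros y. rewrite Hf. unfold trig. ring.
Qed.

Lemma step2v a b rho Rb eb u v p : hierarchy a b rho Rb eb u v p -> forall t, a < t < b ->
  forall x y, v 2%nat x y t =
    trig (E (v 2%nat) 0 t x + 2 * sqrt 2 * (E (v 0%nat) 0 t x * E (v 0%nat) 1 t x))
         (- (2 * sqrt 2 * (E (v 0%nat) 0 t x * E (v 0%nat) 1 t x)))
         (sqrt 2 * E (v 1%nat) 1 t x) y.
Proof.
  intros H t Ht x.
  pose proof (step1u _ _ _ _ _ _ _ _ H t Ht) as H1u.
  destruct (bases _ _ _ _ _ _ _ _ H t Ht) as [B0 [B1 [B2 BP]]].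
  destruct H as [Hs [Hper [Hmean He]]].
  destruct (Hs 2%nat) as [Hu [Hv Hp0]].
  destruct (ode1 (fun w => v 2%nat x w t) 0 (sqrt 2 * E (v 1%nat) 1 t x)
             (2 * sqrt 2 * (E (v 0%nat) 0 t x * E (v 0%nat) 1 t x))) as [_ Hf].
  - apply (sm_y a b _ t nil x Hv Ht).
  - intros y. geteqs He 2%nat x y t Ht Hc Hm Hp.
    change (py (v 2%nat) x y t = trig 0 (sqrt 2 * E (v 1%nat) 1 t x)
              (2 * sqrt 2 * (E (v 0%nat) 0 t x * E (v 0%nat) 1 t x)) y).
    rewrite Hc.
    rewrite (px_trig (u 1%nat) t x y (fun _ => 0) (fun z => - (sqrt 2 * E (v 1%nat) 0 t z))
               (fun z => - (sqrt 2 * (E (v 0%nat) 0 t z * E (v 0%nat) 0 t z)))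
               0 (- (sqrt 2 * E (v 1%nat) 1 t x))
               (- (sqrt 2 * (2 * (E (v 0%nat) 0 t x * E (v 0%nat) 1 t x)))) H1u) by dsolve.
    unfold trig; ring.
  - intros y. apply (Hper 2%nat x y t Ht).
  - intros y. rewrite Hf. unfold trig. change (v 2%nat x 0 t) with (E (v 2%nat) 0 t x). ring.
Qed.

Definition Kf (v : nat -> F3) (Rb : R -> R) t x :=
  sqrt 2 * (E (v 2%nat) 0 t x + 2 * sqrt 2 * (E (v 0%nat) 0 t x * E (v 0%nat) 1 t x))
  - sqrt 2 * (E (v 0%nat) 0 t x * E (v 0%nat) 0 t x * E (v 0%nat) 0 t x)
  + 3 * sqrt 2 * E (v 0%nat) 2 t x + Rb t * E (v 0%nat) 0 t x.

Lemma step2u a b rho Rb eb u v p : hierarchy a b rho Rb eb u v p -> forall t, a < t < b ->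
  forall x y, u 2%nat x y t = trig 0 (- Kf v Rb t x)
                 (- (2 * sqrt 2 * (E (v 0%nat) 0 t x * E (v 1%nat) 0 t x))) y.
Proof.
  intros H t Ht x.
  pose proof (step0v _ _ _ _ _ _ _ _ H t Ht) as H0v.
  pose proof (step0u _ _ _ _ _ _ _ _ H t Ht) as H0u.
  pose proof (step0p _ _ _ _ _ _ _ _ H t Ht) as H0p.
  pose proof (step1v _ _ _ _ _ _ _ _ H t Ht) as H1v.
  pose proof (step1u _ _ _ _ _ _ _ _ H t Ht) as H1u.
  pose proof (step2v _ _ _ _ _ _ _ _ H t Ht) as H2v.
  destruct (bases _ _ _ _ _ _ _ _ H t Ht) as [B0 [B1 [B2 BP]]].
  destruct H as [Hs [Hper [Hmean He]]].
  destruct (Hs 2%nat) as [Hu [Hv Hp0]].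
  assert (Hpxu0 : forall z w, px (u 0%nat) z w t = trig 0 (- (sqrt 2 * E (v 0%nat) 1 t z)) 0 w).
  { intros z w. apply (px_trig (u 0%nat) t z w (fun _ => 0) (fun z => - (sqrt 2 * E (v 0%nat) 0 t z)) (fun _ => 0)
               0 (- (sqrt 2 * E (v 0%nat) 1 t z)) 0 H0u); dsolve. }
  destruct (ode2 (fun w => u 2%nat x w t) (E (p 0%nat) 1 t x - 2 * sqrt 2 * E (v 0%nat) 2 t x - 2 * (E (v 0%nat) 0 t x * E (v 0%nat) 1 t x))
              (Kf v Rb t x) (2 * sqrt 2 * (E (v 0%nat) 0 t x * E (v 1%nat) 0 t x))) as [_ Hf].
  - apply (sm_y a b _ t nil x Hu Ht).
  - apply (sm_y a b _ t (cons 1%nat nil) x Hu Ht).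
  - intros y. geteqs He 2%nat x y t Ht Hc Hm Hp.
    change (py (py (u 2%nat)) x y t = trig (E (p 0%nat) 1 t x - 2 * sqrt 2 * E (v 0%nat) 2 t x - 2 * (E (v 0%nat) 0 t x * E (v 0%nat) 1 t x))
              (Kf v Rb t x) (2 * sqrt 2 * (E (v 0%nat) 0 t x * E (v 1%nat) 0 t x)) y).
    rewrite Hm.
    rewrite (px_trig (u 1%nat) t x y (fun _ => 0) (fun z => - (sqrt 2 * E (v 1%nat) 0 t z))
               (fun z => - (sqrt 2 * (E (v 0%nat) 0 t z * E (v 0%nat) 0 t z)))
               0 (- (sqrt 2 * E (v 1%nat) 1 t x))
               (- (sqrt 2 * (2 * (E (v 0%nat) 0 t x * E (v 0%nat) 1 t x)))) H1u) by dsolve.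
    rewrite (px_trig (u 0%nat) t x y (fun _ => 0) (fun z => - (sqrt 2 * E (v 0%nat) 0 t z)) (fun _ => 0)
               0 (- (sqrt 2 * E (v 0%nat) 1 t x)) 0 H0u) by dsolve.
    rewrite (px_trig (px (u 0%nat)) t x y (fun _ => 0) (fun z => - (sqrt 2 * E (v 0%nat) 1 t z)) (fun _ => 0)
               0 (- (sqrt 2 * E (v 0%nat) 2 t x)) 0 Hpxu0) by dsolve.
    rewrite (px_trig (p 0%nat) t x y (fun z => E (p 0%nat) 0 t z - 2 * sqrt 2 * E (v 0%nat) 1 t z)
               (fun z => 2 * sqrt 2 * E (v 0%nat) 1 t z) (fun _ => 0)
               (E (p 0%nat) 1 t x - 2 * sqrt 2 * E (v 0%nat) 2 t x) (2 * sqrt 2 * E (v 0%nat) 2 t x) 0 H0p) by dsolve.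
    rewrite (py_trig (u 0%nat) t x y 0 (- (sqrt 2 * E (v 0%nat) 0 t x)) 0) by (intros; apply H0u).
    rewrite (py_trig (u 1%nat) t x y 0 (- (sqrt 2 * E (v 1%nat) 0 t x))
                (- (sqrt 2 * (E (v 0%nat) 0 t x * E (v 0%nat) 0 t x)))) by (intros; apply H1u).
    rewrite H2v, H1v, H0v, H0u.
    apply (pyth_fix y (2 * (E (v 0%nat) 0 t x * E (v 0%nat) 1 t x))).
    unfold trig, Kf. sq2ring.
  - intros y. apply (Hper 2%nat x y t Ht).
  - apply (Hmean 2%nat x t Ht).
  - intros y. rewrite Hf. unfold trig. ring.
Qed.


Definition K1f (v : nat -> F3) (Rb : R -> R) t z :=
  sqrt 2 * (E (v 2%nat) 1 t z + 2 * sqrt 2 * (E (v 0%nat) 1 t z * E (v 0%nat) 1 t z + E (v 0%nat) 0 t z * E (v 0%nat) 2 t z))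
  - sqrt 2 * (3 * (E (v 0%nat) 0 t z * E (v 0%nat) 0 t z) * E (v 0%nat) 1 t z)
  + 3 * sqrt 2 * E (v 0%nat) 3 t z + Rb t * E (v 0%nat) 1 t z.
Definition K2f (v : nat -> F3) (Rb : R -> R) t z :=
  sqrt 2 * (E (v 2%nat) 2 t z + 2 * sqrt 2 * (3 * (E (v 0%nat) 1 t z * E (v 0%nat) 2 t z) + E (v 0%nat) 0 t z * E (v 0%nat) 3 t z))
  - sqrt 2 * (6 * (E (v 0%nat) 0 t z * E (v 0%nat) 1 t z * E (v 0%nat) 1 t z)
              + 3 * (E (v 0%nat) 0 t z * E (v 0%nat) 0 t z) * E (v 0%nat) 2 t z)
  + 3 * sqrt 2 * E (v 0%nat) 4 t z + Rb t * E (v 0%nat) 2 t z.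
Definition G1f (v : nat -> F3) t z :=
  - (2 * sqrt 2 * (E (v 0%nat) 1 t z * E (v 1%nat) 0 t z + E (v 0%nat) 0 t z * E (v 1%nat) 1 t z)).
Definition G2f (v : nat -> F3) t z :=
  - (2 * sqrt 2 * (E (v 0%nat) 2 t z * E (v 1%nat) 0 t z + 2 * (E (v 0%nat) 1 t z * E (v 1%nat) 1 t z)
                   + E (v 0%nat) 0 t z * E (v 1%nat) 2 t z)).

Lemma meanP (G : R -> R) (P : R -> R -> R) : (forall y, ex_derive G y) ->
  (forall y, Derive G y = P (sin y) (cos y)) ->
  (forall s c, P s c = P 0 0 + (P 0 1 - P 0 (-1)) / 2 * c + (P 1 0 - P (-1) 0) / 2 * s
      + ((P 0 1 + P 0 (-1)) / 2 - P 0 0) * (c * c)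
      + (P 1 1 - P 0 0 - (P 0 1 - P 0 (-1)) / 2 - (P 1 0 - P (-1) 0) / 2
         - ((P 0 1 + P 0 (-1)) / 2 - P 0 0) - ((P 1 0 + P (-1) 0) / 2 - P 0 0)) * (s * c)
      + ((P 1 0 + P (-1) 0) / 2 - P 0 0) * (s * s)) ->
  (forall y, G (y + 2 * PI) = G y) ->
  (P 1 0 + P (-1) 0 + P 0 1 + P 0 (-1)) / 4 = 0.
Proof.
  intros Hd HD HP Hp.
  assert (H := mean2 G _ _ _ _ _ _ Hd (fun y => eq_trans (HD y) (HP (sin y) (cos y))) Hp).
  lra.
Qed.

Lemma step3 a b rho Rb eb u v p : hierarchy a b rho Rb eb u v p -> forall t, a < t < b ->
  forall x, pt (v 0%nat) x 0 t = - rho t * E (v 0%nat) 0 t x - 3 * E (v 0%nat) 4 t x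
      - sqrt 2 * Rb t * E (v 0%nat) 2 t x
      + 2 / 3 * (6 * (E (v 0%nat) 0 t x * E (v 0%nat) 1 t x * E (v 0%nat) 1 t x)
                 + 3 * (E (v 0%nat) 0 t x * E (v 0%nat) 0 t x) * E (v 0%nat) 2 t x).
Proof.
  intros H t Ht x.
  pose proof (step0v _ _ _ _ _ _ _ _ H) as H0v'.
  pose proof (step0v _ _ _ _ _ _ _ _ H t Ht) as H0v.
  pose proof (step0u _ _ _ _ _ _ _ _ H t Ht) as H0u.
  pose proof (step1v _ _ _ _ _ _ _ _ H t Ht) as H1v.
  pose proof (step1u _ _ _ _ _ _ _ _ H t Ht) as H1u.
  pose proof (step2v _ _ _ _ _ _ _ _ H t Ht) as H2v.
  pose proof (step2u _ _ _ _ _ _ _ _ H t Ht) as H2u.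
  destruct (bases _ _ _ _ _ _ _ _ H t Ht) as [B0 [B1 [B2 BP]]].
  destruct H as [Hs [Hper [Hmean He]]].
  destruct (Hs 3%nat) as [Hu3 [Hv3 Hp3]].
  assert (Hpxu2 : forall z w, px (u 2%nat) z w t = trig 0 (- K1f v Rb t z) (G1f v t z) w).
  { intros z w. apply (px_trig (u 2%nat) t z w (fun _ => 0) (fun z => - Kf v Rb t z)
       (fun z => - (2 * sqrt 2 * (E (v 0%nat) 0 t z * E (v 1%nat) 0 t z)))); [exact H2u | dsolve | | ].
    unfold Kf, K1f; dsolve. unfold G1f; dsolve. }
  assert (Hpxxu2 : forall z w, px (px (u 2%nat)) z w t = trig 0 (- K2f v Rb t z) (G2f v t z) w).
  { intros z w. apply (px_trig (px (u 2%nat)) t z w (fun _ => 0) (fun z => - K1f v Rb t z) (G1f v t));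
    [exact Hpxu2 | dsolve | | ].
    unfold K1f, K2f; dsolve. unfold G1f, G2f; dsolve. }
  assert (Hpyv3 : forall z w, py (v 3%nat) z w t = trig 0 (K1f v Rb t z) (- G1f v t z) w).
  { intros z w. geteqs He 3%nat z w t Ht Hc Hm Hp. rewrite Hc, Hpxu2. unfold trig; ring. }
  assert (HpyW : forall y, py (px (v 3%nat)) x y t = trig 0 (K2f v Rb t x) (- G2f v t x) y).
  { intros y. rewrite (schwarz3 a b (v 3%nat) t x y Hv3 Ht).
    apply (px_trig (py (v 3%nat)) t x y (fun _ => 0) (K1f v Rb t) (fun z => - G1f v t z));
    [exact Hpyv3 | dsolve | | ].
    unfold K1f, K2f; dsolve. unfold G1f, G2f; dsolve. }
  assert (Hpxv2 : forall z w, px (v 2%nat) z w t =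
     trig (E (v 2%nat) 1 t z + 2 * sqrt 2 * (E (v 0%nat) 1 t z * E (v 0%nat) 1 t z + E (v 0%nat) 0 t z * E (v 0%nat) 2 t z))
          (- (2 * sqrt 2 * (E (v 0%nat) 1 t z * E (v 0%nat) 1 t z + E (v 0%nat) 0 t z * E (v 0%nat) 2 t z)))
          (sqrt 2 * E (v 1%nat) 2 t z) w).
  { intros z w. apply (px_trig (v 2%nat) t z w
      (fun z => E (v 2%nat) 0 t z + 2 * sqrt 2 * (E (v 0%nat) 0 t z * E (v 0%nat) 1 t z))
      (fun z => - (2 * sqrt 2 * (E (v 0%nat) 0 t z * E (v 0%nat) 1 t z)))
      (fun z => sqrt 2 * E (v 1%nat) 1 t z)); [exact H2v | dsolve | dsolve | dsolve]. }
  assert (Hpxxv2 : forall y, px (px (v 2%nat)) x y t =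
     trig (E (v 2%nat) 2 t x + 2 * sqrt 2 * (3 * (E (v 0%nat) 1 t x * E (v 0%nat) 2 t x) + E (v 0%nat) 0 t x * E (v 0%nat) 3 t x))
          (- (2 * sqrt 2 * (3 * (E (v 0%nat) 1 t x * E (v 0%nat) 2 t x) + E (v 0%nat) 0 t x * E (v 0%nat) 3 t x)))
          (sqrt 2 * E (v 1%nat) 3 t x) y).
  { intros y. apply (px_trig (px (v 2%nat)) t x y
      (fun z => E (v 2%nat) 1 t z + 2 * sqrt 2 * (E (v 0%nat) 1 t z * E (v 0%nat) 1 t z + E (v 0%nat) 0 t z * E (v 0%nat) 2 t z))
      (fun z => - (2 * sqrt 2 * (E (v 0%nat) 1 t z * E (v 0%nat) 1 t z + E (v 0%nat) 0 t z * E (v 0%nat) 2 t z)))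
      (fun z => sqrt 2 * E (v 1%nat) 2 t z)); [exact Hpxv2 | dsolve | dsolve | dsolve]. }
  assert (Hpxv1 : forall y, px (v 1%nat) x y t = trig (E (v 1%nat) 1 t x) 0 (sqrt 2 * E (v 0%nat) 2 t x) y).
  { intros y. apply (px_trig (v 1%nat) t x y (E (v 1%nat) 0 t) (fun _ => 0) (fun z => sqrt 2 * E (v 0%nat) 1 t z));
    [exact H1v | dsolve | dsolve | dsolve]. }
  assert (Hpxv0 : forall y, px (v 0%nat) x y t = trig (E (v 0%nat) 1 t x) 0 0 y).
  { intros y. apply (px_trig (v 0%nat) t x y (E (v 0%nat) 0 t) (fun _ => 0) (fun _ => 0));
    [intros; rewrite H0v; unfold trig; ring | dsolve | dsolve | dsolve]. }
  assert (Hpyv0 : forall y, py (v 0%nat) x y t = 0).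
  { intros y. geteqs He 0%nat x y t Ht Hc Hm Hp. rewrite Hc. ring. }
  assert (Hpyv1 : forall y, py (v 1%nat) x y t = trig 0 (sqrt 2 * E (v 0%nat) 1 t x) 0 y).
  { intros y. rewrite (py_trig _ t x y _ _ _ (H1v x)). unfold trig; ring. }
  assert (Hpyv2 : forall y, py (v 2%nat) x y t =
     trig 0 (sqrt 2 * E (v 1%nat) 1 t x) (2 * sqrt 2 * (E (v 0%nat) 0 t x * E (v 0%nat) 1 t x)) y).
  { intros y. rewrite (py_trig _ t x y _ _ _ (H2v x)). unfold trig; ring. }
  assert (Hpt : forall y, pt (v 0%nat) x y t = pt (v 0%nat) x 0 t).
  { intros y. apply (pt_loc a b (v 0%nat) (fun s => v 0%nat x 0 s) t x y Ht).
    intros s Hs'. rewrite (H0v' s Hs'). reflexivity. }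
  set (G := fun w => p 3%nat x w t + px (u 3%nat) x w t - sqrt 2 * (cos w * px (v 3%nat) x w t)).
  assert (HG : forall y, is_derive G y (py (p 3%nat) x y t + px (py (u 3%nat)) x y t
                 - sqrt 2 * (- sin y * px (v 3%nat) x y t + cos y * py (px (v 3%nat)) x y t))).
  { intros y. rewrite <- (schwarz3 a b (u 3%nat) t x y Hu3 Ht).
    assert (D1 : is_derive (fun w => p 3%nat x w t) y (py (p 3%nat) x y t))
      by (apply (Derive_correct (fun w => p 3%nat x w t)); apply (sm_y a b _ t nil x Hp3 Ht)).
    assert (D2 : is_derive (fun w => px (u 3%nat) x w t) y (py (px (u 3%nat)) x y t))
      by (apply (Derive_correct (fun w => px (u 3%nat) x w t)); apply (sm_y a b _ t (cons 0%nat nil) x Hu3 Ht)).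
    assert (D3 : is_derive (fun w => px (v 3%nat) x w t) y (py (px (v 3%nat)) x y t))
      by (apply (Derive_correct (fun w => px (v 3%nat) x w t)); apply (sm_y a b _ t (cons 0%nat nil) x Hv3 Ht)).
    unfold G. dsolve. }
  evar (P : R -> R -> R).
  assert (HD : forall y, Derive G y = P (sin y) (cos y)).
  { intros y. rewrite (is_derive_unique _ _ _ (HG y)).
    geteqs He 3%nat x y t Ht Hc Hm Hp. rewrite Hp.
    rewrite HpyW, Hpxxv2, Hpxv2, Hpxv1, Hpxv0, Hpyv0, Hpyv1, Hpyv2, Hpt, Hpyv3.
    rewrite H2u, H1u, H0u, H2v, H1v, H0v.
    unfold trig, K1f, K2f, G1f, G2f, Kf. ring_simplify.
    match goal with |- ?L = _ => let L' := eval pattern (sin y), (cos y) in L in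
      match L' with ?F _ _ => let e := eval cbv delta [P] in P in unify e F end end.
    subst P. reflexivity. }
  assert (HM := meanP G P (fun y => ex_intro _ _ (HG y)) HD).
  assert (HP : forall s c, P s c = P 0 0 + (P 0 1 - P 0 (-1)) / 2 * c + (P 1 0 - P (-1) 0) / 2 * s
      + ((P 0 1 + P 0 (-1)) / 2 - P 0 0) * (c * c)
      + (P 1 1 - P 0 0 - (P 0 1 - P 0 (-1)) / 2 - (P 1 0 - P (-1) 0) / 2
         - ((P 0 1 + P 0 (-1)) / 2 - P 0 0) - ((P 1 0 + P (-1) 0) / 2 - P 0 0)) * (s * c)
      + ((P 1 0 + P (-1) 0) / 2 - P 0 0) * (s * s)).
  { intros s c. subst P. cbv beta. field. }
  assert (HGp : forall y, G (y + 2 * PI) = G y).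
  { intros y. unfold G. rewrite (proj2 (proj2 (Hper 3%nat x y t Ht))).
    assert (E1 : px (u 3%nat) x (y + 2 * PI) t = px (u 3%nat) x y t).
    { unfold px. apply Derive_ext. intros z. apply (proj1 (Hper 3%nat z y t Ht)). }
    assert (E2 : px (v 3%nat) x (y + 2 * PI) t = px (v 3%nat) x y t).
    { unfold px. apply Derive_ext. intros z. apply (proj1 (proj2 (Hper 3%nat z y t Ht))). }
    rewrite E1, E2, cos_plus, cos_2PI, sin_2PI. ring. }
  specialize (HM HP HGp). subst P. cbv beta in HM.
  ring_simplify in HM. rewrite ?sq2_2, ?sq2_3, ?sq2_4 in HM.
  ring_simplify. rewrite ?sq2_2, ?sq2_3, ?sq2_4. lra.
Qed.


Lemma general a b rho Rb eb u v p : hierarchy a b rho Rb eb u v p ->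
  amplitude_law a b (fun t => - rho t) (fun t => - sqrt 2 * Rb t) u v.
Proof.
  intros H. exists (fun x t => v 0%nat x 0 t). split.
  - intros x y t Ht. split.
    + apply (step0v _ _ _ _ _ _ _ _ H t Ht).
    + rewrite (step0u _ _ _ _ _ _ _ _ H t Ht). unfold trig. change (v 0%nat x 0 t) with (E (v 0%nat) 0 t x). ring.
  - intros x t Ht.
    destruct (bases _ _ _ _ _ _ _ _ H t Ht) as [B0 [B1 [B2 BP]]].
    assert (Hc : dx (dx (fun z s => v 0%nat z 0 s ^ 3)) x t =
       6 * (E (v 0%nat) 0 t x * E (v 0%nat) 1 t x * E (v 0%nat) 1 t x)
       + 3 * (E (v 0%nat) 0 t x * E (v 0%nat) 0 t x) * E (v 0%nat) 2 t x).
    { unfold dx.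
      change (fun w => v 0%nat w 0 t ^ 3) with (fun w => E (v 0%nat) 0 t w ^ 3).
      rewrite (Derive_ext (fun z => Derive (fun w => E (v 0%nat) 0 t w ^ 3) z)
                 (fun z => 3 * (E (v 0%nat) 0 t z * E (v 0%nat) 0 t z) * E (v 0%nat) 1 t z)).
      2:{ intros z. apply is_derive_unique. dsolve. simpl; ring. }
      apply is_derive_unique. dsolve. }
    rewrite Hc.
    change (dt (fun x t => v 0%nat x 0 t) x t) with (pt (v 0%nat) x 0 t).
    change (dx (dx (dx (dx (fun x t => v 0%nat x 0 t)))) x t) with (E (v 0%nat) 4 t x).
    change (dx (dx (fun x t => v 0%nat x 0 t)) x t) with (E (v 0%nat) 2 t x).
    change (v 0%nat x 0 t) with (E (v 0%nat) 0 t x).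
    rewrite (step3 _ _ _ _ _ _ _ _ H t Ht x). ring.
Qed.

Lemma amp_ext a b c0 c2 c0' c2' u v :
  (forall t, a < t < b -> c0 t = c0' t) -> (forall t, a < t < b -> c2 t = c2' t) ->
  amplitude_law a b c0 c2 u v -> amplitude_law a b c0' c2' u v.
Proof.
  intros H0 H2 [A [HA HB]]. exists A. split; [exact HA|].
  intros x t Ht. rewrite <- H0, <- H2 by exact Ht. apply HB, Ht.
Qed.

Lemma const_on a b (g : R -> R) : a < 0 < b -> (forall t, a < t < b -> is_derive g t 0) ->
  forall t, a < t < b -> g t = g 0.
Proof.
  intros Hab Hd t Ht.
  destruct (MVT_gen g 0 t (fun _ => 0)) as [c [_ Hc]].
  - intros s Hs. apply Hd.
    assert (Rmin 0 t <= s <= Rmax 0 t) by lra.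
    destruct (Rle_dec 0 t); [rewrite Rmin_left, Rmax_right in *|rewrite Rmin_right, Rmax_left in *]; lra.
  - intros s Hs. apply derivable_continuous_pt. exists 0. apply is_derive_Reals, Hd.
    destruct (Rle_dec 0 t); [rewrite Rmin_left, Rmax_right in *|rewrite Rmin_right, Rmax_left in *]; lra.
  - lra.
Qed.

Lemma loc_in a b t : a < t < b -> locally t (fun s => a < s < b).
Proof.
  intros Ht.
  assert (Hd : 0 < Rmin (t - a) (b - t)) by (apply Rmin_pos; lra).
  exists (mkposreal _ Hd). intros s Hs.
  unfold ball in Hs; simpl in Hs; unfold AbsRing_ball, abs, minus, plus, opp in Hs; simpl in Hs.
  apply Rabs_def2 in Hs. destruct Hs as [H1 H2].
  assert (Rmin (t - a) (b - t) <= t - a) by apply Rmin_l.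
  assert (Rmin (t - a) (b - t) <= b - t) by apply Rmin_r. lra.
Qed.

Lemma riccati a b (e : R -> R) k : a < 0 < b -> (forall t, a < t < b -> is_derive e t (k * e t ^ 2)) ->
  forall t, a < t < b -> e t * (1 - k * e 0 * t) = e 0.
Proof.
  intros Hab Hd.
  assert (Hcont : forall s, a < s < b -> continuous e s).
  { intros s Hs. apply (ex_derive_continuous e). eexists; apply Hd, Hs. }
  set (I := fun s => RInt e 0 s).
  assert (HI : forall s, a < s < b -> is_derive I s (e s)).
  { intros s Hs. apply (is_derive_RInt e I 0 s); [| apply Hcont, Hs].
    apply (filter_imp (fun s => a < s < b)); [| exact (loc_in a b s Hs)].
    intros z Hz. unfold I. apply (RInt_correct e 0 z). apply (ex_RInt_continuous e).
    intros w Hw. apply Hcont.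
    destruct (Rle_dec 0 z); [rewrite Rmin_left, Rmax_right in *|rewrite Rmin_right, Rmax_left in *]; lra. }
  set (psi := fun s => (e s * (1 - k * e 0 * s) - e 0) * exp (- (k * I s))).
  assert (Hpsi : forall s, a < s < b -> psi s = psi 0).
  { apply (const_on a b psi Hab). intros s Hs. unfold psi.
    assert (H1 := Hd s Hs). assert (H2 := HI s Hs).
    eapply D_eq. apply (D_mul (fun s => e s * (1 - k * e 0 * s) - e 0) (fun s => exp (- (k * I s)))).
    dtac. apply is_derive_Reals.
    apply (derivable_pt_lim_comp (fun s => - (k * I s)) exp).
    apply is_derive_Reals. dtac. apply derivable_pt_lim_exp.
    simpl. ring. }
  intros t Ht. specialize (Hpsi t Ht). unfold psi in Hpsi.
  assert (HI0 : I 0 = 0) by (unfold I; rewrite RInt_point; reflexivity).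
  rewrite HI0 in Hpsi.
  replace (exp (- (k * 0))) with 1 in Hpsi by (rewrite Rmult_0_r, Ropp_0, exp_0; reflexivity).
  assert (Hpos := exp_pos (- (k * I t))).
  assert (Hz : e t * (1 - k * e 0 * t) - e 0 = 0).
  { apply (Rmult_eq_reg_r (exp (- (k * I t)))); [| lra]. rewrite Hpsi. ring. }
  lra.
Qed.

Theorem theorem5p4 :
  (* blown-up system: general (Rbar, epsbar) on S^1 *)
  (forall (a b : R) (r Rb eb : R -> R) (u v p : nat -> F3),
     (forall t, a < t < b -> 0 < r t /\ ex_derive r t /\ Rb t ^ 2 + eb t ^ 2 = 1) ->
     hierarchy a b (fun t => Derive r t / r t) Rb eb u v p ->
     amplitude_law a b (fun t => - (Derive r t / r t)) (fun t => - sqrt 2 * Rb t) u v) /\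
  (* chart K1: Rbar = -1, epsbar = eps1, r1' = -r1 eps1/2, eps1' = 3 eps1^2 *)
  (forall (a b : R) (r1 e1 : R -> R) (u v p : nat -> F3),
     a < 0 < b ->
     (forall t, a < t < b -> 0 < r1 t /\
        is_derive r1 t (- / 2 * r1 t * e1 t) /\ is_derive e1 t (3 * e1 t ^ 2)) ->
     hierarchy a b (fun t => Derive r1 t / r1 t) (fun _ => -1) e1 u v p ->
     (forall t, a < t < b -> e1 t = 2 * e1 0 / (2 - 6 * e1 0 * t)) /\
     amplitude_law a b (fun t => e1 t / 2) (fun _ => sqrt 2) u v) /\
  (* chart K2: epsbar = 1, r2' = 0, R2' = 1 *)
  (forall (a b : R) (r2 R2 : R -> R) (u v p : nat -> F3),
     a < 0 < b ->
     (forall t, a < t < b -> 0 < r2 t /\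
        is_derive r2 t 0 /\ is_derive R2 t 1) ->
     hierarchy a b (fun t => Derive r2 t / r2 t) R2 (fun _ => 1) u v p ->
     (forall t, a < t < b -> R2 t = R2 0 + t) /\
     amplitude_law a b (fun _ => 0) (fun t => - sqrt 2 * R2 t) u v) /\
  (* chart K3: Rbar = 1, epsbar = eps3, r3' = r3 eps3/2, eps3' = -3 eps3^2 *)
  (forall (a b : R) (r3 e3 : R -> R) (u v p : nat -> F3),
     a < 0 < b ->
     (forall t, a < t < b -> 0 < r3 t /\
        is_derive r3 t (/ 2 * r3 t * e3 t) /\ is_derive e3 t (- 3 * e3 t ^ 2)) ->
     hierarchy a b (fun t => Derive r3 t / r3 t) (fun _ => 1) e3 u v p ->
     (forall t, a < t < b -> e3 t = 2 * e3 0 / (2 + 6 * e3 0 * t)) /\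
     amplitude_law a b (fun t => - (e3 t / 2)) (fun _ => - sqrt 2) u v).
Proof.
  split; [|split; [|split]].
  - intros a b r Rb eb u v p _ H. exact (general _ _ _ _ _ _ _ _ H).
  - intros a b r1 e1 u v p Hab Hr H. split.
    + intros t Ht.
      assert (Hd : forall s, a < s < b -> is_derive e1 s (3 * e1 s ^ 2)) by (intros s Hs; apply (Hr s Hs)).
      assert (Hc := riccati a b e1 3 Hab Hd t Ht).
      assert (Hn : 2 - 6 * e1 0 * t <> 0).
      { intros Hz. assert (1 - 3 * e1 0 * t = 0) by lra.
        rewrite H0, Rmult_0_r in Hc. rewrite <- Hc in Hz. lra. }
      apply (Rmult_eq_reg_r (2 - 6 * e1 0 * t)); [| exact Hn].
      field_simplify; [| exact Hn]. lra.
    + refine (amp_ext a b _ _ _ _ u v _ _ (general _ _ _ _ _ _ _ _ H)).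
      * intros t Ht. destruct (Hr t Ht) as [Hpos [Hd _]]. rewrite (is_derive_unique _ _ _ Hd). field. lra.
      * intros t Ht. ring.
  - intros a b r2 R2 u v p Hab Hr H. split.
    + intros t Ht.
      assert (Hc := const_on a b (fun s => R2 s - s) Hab).
      simpl in Hc. rewrite Rminus_0_r in Hc.
      assert (R2 t - t = R2 0); [| lra].
      apply Hc; [| exact Ht]. intros s Hs. eapply D_eq.
      apply (D_sub R2 (fun z => z)). apply (Hr s Hs). apply D_id. ring.
    + refine (amp_ext a b _ _ _ _ u v _ _ (general _ _ _ _ _ _ _ _ H)).
      * intros t Ht. destruct (Hr t Ht) as [Hpos [Hd _]]. rewrite (is_derive_unique _ _ _ Hd). field. lra.
      * intros t Ht. ring.
  - intros a b r3 e3 u v p Hab Hr H. split.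
    + intros t Ht.
      assert (Hd : forall s, a < s < b -> is_derive e3 s ((-3) * e3 s ^ 2)).
      { intros s Hs. eapply D_eq. apply (Hr s Hs). ring. }
      assert (Hc := riccati a b e3 (-3) Hab Hd t Ht).
      assert (Hn : 2 + 6 * e3 0 * t <> 0).
      { intros Hz. assert (1 - (-3) * e3 0 * t = 0) by lra.
        rewrite H0, Rmult_0_r in Hc. rewrite <- Hc in Hz. lra. }
      apply (Rmult_eq_reg_r (2 + 6 * e3 0 * t)); [| exact Hn].
      field_simplify; [| exact Hn]. lra.
    + refine (amp_ext a b _ _ _ _ u v _ _ (general _ _ _ _ _ _ _ _ H)).
      * intros t Ht. destruct (Hr t Ht) as [Hpos [Hd _]]. rewrite (is_derive_unique _ _ _ Hd). field. lra.
      * intros t Ht. ring.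
Qed.
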